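(* For every similarity relation ${\mathcal R}$, cut value $\mu$, and higher-order patterns $t,s$, the algorithm $\mathsf{HOPSU}$ started on the configuration $\{t\simeq^?_{{\mathcal R},\mu}s\};\varepsilon;1$ terminates, and it terminates either with a configuration of the form $\emptyset;\sigma;\mathfrak{d}$ or with $\bot$.
   Context: Terms: simply typed $\lambda$-terms over disjoint countably infinite sets $\mathcal{V}$ (typed variables) and $\mathcal{F}$ (typed constants), types $\tau::=\delta\mid\tau\to\tau$. Terms are identified modulo $\alpha$, kept $\beta$-normal, and $\eta$-expanded except that arguments of free variables are kept $\eta$-normal (i.e. are bound variables); a term is written $\lambda x_1,\dots,x_n.h(t_1,\dots,t_m)$ with head $h$. Free variables are written $F,G,H,X,Y,\dots$, bound variables $x,y,z,\dots$. A higher-order pattern is a term where every free variable occurrence is applied to a list of pairwise distinct bound variables; all terms in problems and substitutions are higher-order patterns. Substitutions $\sigma$ are type-preserving maps with finite domain $\mathit{Dom}(\sigma)=\{X\mid X\sigma\neq X\}$, applied postfix ($t\sigma$, capture-avoiding, followed by $\beta$-normalization); $\sigma\vartheta$ means first $\sigma$ then $\vartheta$; $\varepsilon$ is the identity; $\varphi|_V$ is the restriction to $V$; $\mathtt{fv}(t)$ is the set of free variables. Fuzzy setting: T-norm $\wedge=\min$. ${\mathcal R}_A$ is a similarity relation (reflexive, symmetric, min-transitive map to $[0,1]$) on $\mathcal{F}\cup\mathcal{V}$ with ${\mathcal R}_A(x,y)=0$ for distinct variables, ${\mathcal R}_A(f,g)=0$ for constants of different types, ${\mathcal R}_A(x,f)=0$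 for a variable and a constant. It induces ${\mathcal R}$ on terms: on normal forms ${\mathcal R}(a,b)={\mathcal R}_A(a,b)$ for symbols, ${\mathcal R}((t_1\,s_1),(t_2\,s_2))={\mathcal R}(t_1,t_2)\wedge{\mathcal R}(s_1,s_2)$, ${\mathcal R}(\lambda x.t,\lambda y.s)={\mathcal R}(t\{x\mapsto z\},s\{y\mapsto z\})$ for fresh $z$ of the same type, $0$ otherwise. A cut value is $\mu\in(0,1]$. An equation is written $t\simeq^?_{{\mathcal R},\mu}s$; a unification problem is a finite set of equations. Algorithm $\mathsf{HOPSU}$: it works on configurations $P;\sigma;\mathfrak{d}$ ($P$ a problem, $\sigma$ a substitution, $\mathfrak{d}\ge\mu$ a degree) or the failure configuration $\bot$, starting from $\{t\simeq^?_{{\mathcal R},\mu}s\};\varepsilon;1$ and applying the following rules to a selected equation as long as possible ($\uplus$ is disjoint union): (Abs) $\{\lambda x.t\simeq^?\lambda x.s\}\uplus P;\sigma;\mathfrak{d}\leadsto\{t\simeq^?s\}\cup P;\sigma;\mathfrak{d}$. (Dec) $\{f(t_1,\dots,t_n)\simeq^?g(s_1,\dots,s_n)\}\uplus P;\sigma;\mathfrak{d}\leadsto\{t_1\simeq^?s_1,\dots,t_n\simeq^?s_n\}\cup P;\sigma;\mathfrak{d}\wedge{\mathcal R}(f,g)$, where $f,g$ are rigid heads, $n\ge0$, and $\mathfrak{d}\wedge{\mathcal R}(f,g)\ge\mu$. (SV) $\{F(x_1,\dots,x_n)\simeq^?F(y_1,\dots,y_n)\}\uplus P;\sigma;\mathfrak{d}\leadsto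 P\vartheta;\sigma\vartheta;\mathfrak{d}$, where $\{z_1,\dots,z_m\}=\{x_i\mid x_i=y_i\}$ and $\vartheta=\{F\mapsto\lambda x_1,\dots,x_n.H(z_1,\dots,z_m)\}$ with $H$ fresh. (Ori) $\{a(s_1,\dots,s_m)\simeq^?F(x_1,\dots,x_n)\}\uplus P;\sigma;\mathfrak{d}\leadsto\{F(x_1,\dots,x_n)\simeq^?a(s_1,\dots,s_m)\}\cup P;\sigma;\mathfrak{d}$, where $F$ is free and $a$ is a constant or $a\in\{x_1,\dots,x_n\}$. (LF) $\{F(x_1,\dots,x_n)\simeq^?a(s_1,\dots,s_m)\}\uplus P;\sigma;\mathfrak{d}\leadsto P\vartheta;\sigma\vartheta;\mathfrak{d}$, where $F\notin\mathtt{fv}(a(s_1,\dots,s_m))$, $a$ is a constant, a free variable, or in $\{x_1,\dots,x_n\}$, $\mathsf{VarElim}(F(x_1,\dots,x_n),a(s_1,\dots,s_m))=\varphi$, and $\vartheta=\varphi|_V$ with $V=\{F\}\cup\mathtt{fv}(a(s_1,\dots,s_m))$. (Fail) $\{t\simeq^?s\}\uplus P;\sigma;\mathfrak{d}\leadsto\bot$ if no other rule applies to the selected equation. $\mathsf{VarElim}(t,s)$ starts from $\{t\simeq^?s\};\varepsilon$ and applies as long as possible: (VE1) $\{F(x_1,\dots,x_n)\simeq^?a(s_1,\dots,s_m)\}\uplus P;\sigma\leadsto\{H_1(x_1,\dots,x_n)\simeq^?s_1,\dots,H_m(x_1,\dots,x_n)\simeq^?s_m\}\cup P;\sigma\vartheta$,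 where $a$ is a constant or in $\{x_1,\dots,x_n\}$, $\vartheta=\{F\mapsto\lambda x_1,\dots,x_n.a(H_1(x_1,\dots,x_n),\dots,H_m(x_1,\dots,x_n))\}$ with $H_i$ fresh of appropriate types ($\eta$-expanded when needed); (VE2) $\{F(x_1,\dots,x_n)\simeq^?G(y_1,\dots,y_m)\}\uplus P;\sigma\leadsto P\vartheta;\sigma\vartheta$, where $\{x_1,\dots,x_n\}\cap\{y_1,\dots,y_m\}=\{z_1,\dots,z_k\}$ and $\vartheta=\{F\mapsto\lambda x_1,\dots,x_n.H(z_1,\dots,z_k),G\mapsto\lambda y_1,\dots,y_m.H(z_1,\dots,z_k)\}$ with $H$ fresh. If it ends in $\emptyset;\varphi$, then $\mathsf{VarElim}(t,s)=\varphi$. *)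

(* Defs.v *)
(* Simply typed lambda-terms in beta-normal, eta-long form
   (arguments of free variables kept eta-normal, i.e. bound variables),
   locally nameless: bound variables bound by a lambda are de Bruijn indices,
   bound variables that became "free" in an equation (after rule Abs / VE1)
   are named atoms. *)
From Stdlib Require Import List Arith Reals Relations.
Import ListNotations.

Inductive ty := Base (d : nat) | Arr (A B : ty).
Definition ty_eq_dec : forall A B : ty, {A = B} + {A <> B}.
Proof. decide equality; apply Nat.eq_dec. Defined.

Fixpoint ty_args (T : ty) : list ty :=
  match T with Base _ => [] | Arr A B => A :: ty_args B end.
Fixpoint ty_res (T : ty) : ty :=
  match T with Base d => Base d | Arr _ B => ty_res B end.
Definition arrows (As : list ty) (r : ty) : ty := fold_right Arr r As.

Record fvar := FV { fv_name : nat; fv_ty : ty }.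
Record cst := Cst { cst_name : nat; cst_ty : ty }.
Record atom := Atom { atom_name : nat; atom_ty : ty }.

Definition fvar_eq_dec : forall F G : fvar, {F = G} + {F <> G}.
Proof. decide equality; [apply ty_eq_dec | apply Nat.eq_dec]. Defined.
Definition cst_eq_dec : forall F G : cst, {F = G} + {F <> G}.
Proof. decide equality; [apply ty_eq_dec | apply Nat.eq_dec]. Defined.
Definition atom_eq_dec : forall F G : atom, {F = G} + {F <> G}.
Proof. decide equality; [apply ty_eq_dec | apply Nat.eq_dec]. Defined.

Inductive bv := BIdx (k : nat) | BAtom (a : atom).
Definition bv_eq_dec : forall x y : bv, {x = y} + {x <> y}.
Proof. decide equality; [apply Nat.eq_dec | apply atom_eq_dec]. Defined.

Inductive head := HC (c : cst) | HB (x : bv).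

Inductive tm :=
| Lam (A : ty) (b : tm)
| Rig (h : head) (args : list tm)
| Flex (F : fvar) (xs : list bv).

Definition eqn := (tm * tm)%type.

Definition bv_type (G : list ty) (x : bv) : option ty :=
  match x with BIdx k => nth_error G k | BAtom a => Some (atom_ty a) end.
Definition head_type (G : list ty) (h : head) : option ty :=
  match h with HC c => Some (cst_ty c) | HB x => bv_type G x end.

Inductive pattern (G : list ty) : tm -> ty -> Prop :=
| P_Lam A b B : pattern (A :: G) b B -> pattern G (Lam A b) (Arr A B)
| P_Rig h args tys d :
    head_type G h = Some (arrows tys (Base d)) ->
    Forall2 (pattern G) args tys ->
    pattern G (Rig h args) (Base d)
| P_Flex F xs tys d :
    fv_ty F = arrows tys (Base d) ->
    Forall2 (fun x T => bv_type G x = Some T) xs tys ->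
    NoDup xs ->
    pattern G (Flex F xs) (Base d).

Fixpoint fv (t : tm) : list fvar :=
  match t with
  | Lam _ b => fv b
  | Rig _ args => (fix go l := match l with [] => [] | u :: l' => fv u ++ go l' end) args
  | Flex F _ => [F]
  end.

Definition atoms_bv (x : bv) : list atom :=
  match x with BIdx _ => [] | BAtom a => [a] end.
Definition atoms_head (h : head) : list atom :=
  match h with HC _ => [] | HB x => atoms_bv x end.
Fixpoint atoms (t : tm) : list atom :=
  match t with
  | Lam _ b => atoms b
  | Rig h args => atoms_head h ++
      (fix go l := match l with [] => [] | u :: l' => atoms u ++ go l' end) args
  | Flex _ xs => flat_map atoms_bv xs
  end.

Definition fv_eqs (P : list eqn) : list fvar :=
  flat_map (fun e => fv (fst e) ++ fv (snd e)) P.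
Definition atoms_eqs (P : list eqn) : list atom :=
  flat_map (fun e => atoms (fst e) ++ atoms (snd e)) P.

Definition lams (As : list ty) (b : tm) : tm := fold_right Lam b As.

Definition idxs (n : nat) : list bv := map (fun j => BIdx (n - 1 - j)) (seq 0 n).

Definition eta (F : fvar) : tm :=
  let As := ty_args (fv_ty F) in lams As (Flex F (idxs (length As))).

Definition shift_bv (d : nat) (x : bv) : bv :=
  match x with BIdx j => BIdx (j + d) | BAtom a => BAtom a end.

(* replace the n outermost (stripped) binders, seen at depth d, by xs *)
Definition ren_bv (d n : nat) (xs : list bv) (x : bv) : bv :=
  match x with
  | BIdx k => if k <? d then BIdx k
              else if k - d <? n then shift_bv d (nth (n - 1 - (k - d)) xs (BIdx 0))
              else BIdx (k - n)
  | BAtom a => BAtom a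
  end.
Definition ren_head (d n : nat) (xs : list bv) (h : head) : head :=
  match h with HC c => HC c | HB x => HB (ren_bv d n xs x) end.
Fixpoint ren (d n : nat) (xs : list bv) (t : tm) : tm :=
  match t with
  | Lam A b => Lam A (ren (S d) n xs b)
  | Rig h args => Rig (ren_head d n xs h)
      ((fix go l := match l with [] => [] | u :: l' => ren d n xs u :: go l' end) args)
  | Flex F ys => Flex F (map (ren_bv d n xs) ys)
  end.

Fixpoint strip (n : nat) (t : tm) : tm :=
  match n, t with
  | S n', Lam _ b => strip n' b
  | _, _ => t
  end.

(* beta-normal form of (lambda x1..xn. u) applied to bound variables xs *)
Definition inst (u : tm) (xs : list bv) : tm :=
  ren 0 (length xs) xs (strip (length xs) u).

(* A substitution maps every free variable to a (closed) term; variables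
   outside the domain are mapped to their eta-expansion. *)
Definition subst := fvar -> tm.
Definition eps : subst := eta.

Fixpoint app_sub (s : subst) (t : tm) : tm :=
  match t with
  | Lam A b => Lam A (app_sub s b)
  | Rig h args => Rig h
      ((fix go l := match l with [] => [] | u :: l' => app_sub s u :: go l' end) args)
  | Flex F xs => inst (s F) xs
  end.

Definition sub_eq (s : subst) (e : eqn) : eqn := (app_sub s (fst e), app_sub s (snd e)).

(* sigma theta : first sigma, then theta *)
Definition comp (s th : subst) : subst := fun F => app_sub th (s F).

Definition restrict (s : subst) (V : list fvar) : subst :=
  fun F => if in_dec fvar_eq_dec F V then s F else eta F.

Definition used (P : list eqn) (s : subst) (H : fvar) : Prop :=
  In H (fv_eqs P) \/ s H <> eta H \/ (exists G, s G <> eta G /\ In H (fv (s G))).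

Definition open_bv (k : nat) (a : atom) (x : bv) : bv :=
  match x with BIdx j => if j =? k then BAtom a else BIdx j | BAtom b => BAtom b end.
Definition open_head k a h := match h with HC c => HC c | HB x => HB (open_bv k a x) end.
Fixpoint open_rec (k : nat) (a : atom) (t : tm) : tm :=
  match t with
  | Lam A b => Lam A (open_rec (S k) a b)
  | Rig h args => Rig (open_head k a h)
      ((fix go l := match l with [] => [] | u :: l' => open_rec k a u :: go l' end) args)
  | Flex F xs => Flex F (map (open_bv k a) xs)
  end.

Fixpoint open_lams (zs : list atom) (t : tm) : tm :=
  match zs, t with
  | a :: zs', Lam _ b => open_lams zs' (open_rec 0 a b)
  | _, _ => t
  end.

Fixpoint pos_of (x : bv) (l : list bv) : option nat :=
  match l with
  | [] => None
  | y :: l' => if bv_eq_dec x y then Some 0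
               else match pos_of x l' with Some j => Some (S j) | None => None end
  end.

(* abstract the atoms ys (to be bound by length ys outer lambdas), at depth d *)
Definition close_bv (d : nat) (ys : list bv) (x : bv) : bv :=
  match x with
  | BIdx _ => x
  | BAtom _ => match pos_of x ys with
               | Some j => BIdx (d + (length ys - 1 - j))
               | None => x
               end
  end.
Definition close_head d ys h := match h with HC c => HC c | HB x => HB (close_bv d ys x) end.
Fixpoint close_tm (d : nat) (ys : list bv) (t : tm) : tm :=
  match t with
  | Lam A b => Lam A (close_tm (S d) ys b)
  | Rig h args => Rig (close_head d ys h)
      ((fix go l := match l with [] => [] | u :: l' => close_tm d ys u :: go l' end) args)
  | Flex F xs => Flex F (map (close_bv d ys) xs)
  end.

Definition abstr (As : list ty) (xs : list bv) (body : tm) : tm :=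
  lams As (close_tm 0 xs body).

(* P = {e} disjoint-union P0, problems being read as finite sets *)
Definition sel (P : list eqn) (e : eqn) (P0 : list eqn) : Prop :=
  (forall x, In x P <-> x = e \/ In x P0) /\ ~ In e P0.

Definition head_ty (h : head) : ty :=
  match h with HC c => cst_ty c | HB (BAtom a) => atom_ty a | HB (BIdx _) => Base 0 end.

(* [avoid]: variables used by the enclosing HOPSU configuration (fresh
   variables must avoid them too). *)
Inductive ve_rstep (avoid : fvar -> Prop) :
    eqn -> list eqn -> subst -> list eqn -> subst -> Prop :=
| VE1 F xs a ss P0 phi (ch : list (fvar * list atom)) :
    (match a with HC _ => True | HB b => In b xs end) ->
    (* H_i fresh, of type (types of x1..xn) -> (argument types of s_i) -> base,
       together with fresh bound atoms for the leading lambdas of s_i *)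
    Forall2 (fun c Si => fv_ty (fst c) = arrows (ty_args (fv_ty F) ++ ty_args Si) (ty_res Si)
                        /\ map atom_ty (snd c) = ty_args Si)
            ch (ty_args (head_ty a)) ->
    length ch = length ss ->
    NoDup (map fst ch) ->
    Forall (fun H => ~ avoid H /\ ~ used ((Flex F xs, Rig a ss) :: P0) phi H) (map fst ch) ->
    NoDup (concat (map snd ch)) ->
    Forall (fun z => ~ In z (atoms_eqs ((Flex F xs, Rig a ss) :: P0))) (concat (map snd ch)) ->
    let newe := map (fun p => let '(s, (H, zs)) := p in
                              (Flex H (xs ++ map BAtom zs), open_lams zs s)) (combine ss ch) in
    let args' := map (fun c => let '(H, zs) := c in
                       abstr (map atom_ty zs) (map BAtom zs) (Flex H (xs ++ map BAtom zs))) ch in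
    let th : subst := fun K => if fvar_eq_dec K F
                               then abstr (ty_args (fv_ty F)) xs (Rig a args')
                               else eta K in
    ve_rstep avoid (Flex F xs, Rig a ss) P0 phi (newe ++ P0) (comp phi th)
| VE2 F xs G ys P0 phi n :
    let ps := filter (fun p => if in_dec bv_eq_dec (fst p) ys then true else false)
                     (combine xs (ty_args (fv_ty F))) in
    let zs := map fst ps in
    let H := FV n (arrows (map snd ps) (ty_res (fv_ty F))) in
    ~ avoid H -> ~ used ((Flex F xs, Flex G ys) :: P0) phi H ->
    let th : subst := fun K => if fvar_eq_dec K F then abstr (ty_args (fv_ty F)) xs (Flex H zs)
                               else if fvar_eq_dec K G then abstr (ty_args (fv_ty G)) ys (Flex H zs)
                               else eta K in
    ve_rstep avoid (Flex F xs, Flex G ys) P0 phi (map (sub_eq th) P0) (comp phi th).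

Definition ve_step (avoid : fvar -> Prop) (c c' : list eqn * subst) : Prop :=
  exists e P0, sel (fst c) e P0 /\ ve_rstep avoid e P0 (snd c) (fst c') (snd c').

Definition varelim (avoid : fvar -> Prop) (e : eqn) (phi : subst) : Prop :=
  clos_refl_trans _ (ve_step avoid) ([e], eps) ([], phi).

(* R_A restricted to constants; on variables it is forced by the axioms:
   R(x,x)=1, R(x,y)=0 for distinct variables, R(x,f)=0. *)
Record similarity := {
  simc : cst -> cst -> R;
  sim_range : forall f g, (0 <= simc f g <= 1)%R;
  sim_refl : forall f, simc f f = 1%R;
  sim_sym : forall f g, simc f g = simc g f;
  sim_trans : forall f g h, (Rmin (simc f g) (simc g h) <= simc f h)%R;
  sim_types : forall f g, cst_ty f <> cst_ty g -> simc f g = 0%R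
}.

Definition Rhead (Rs : similarity) (h1 h2 : head) : R :=
  match h1, h2 with
  | HC f, HC g => simc Rs f g
  | HB x, HB y => if bv_eq_dec x y then 1%R else 0%R
  | _, _ => 0%R
  end.

Inductive conf := Bot | Conf (P : list eqn) (s : subst) (d : R).

Inductive h_rstep (Rs : similarity) (mu : R) : eqn -> list eqn -> subst -> R -> conf -> Prop :=
| R_Abs A t s a P0 sg d :
    atom_ty a = A -> ~ In a (atoms_eqs ((Lam A t, Lam A s) :: P0)) ->
    h_rstep Rs mu (Lam A t, Lam A s) P0 sg d
      (Conf ((open_rec 0 a t, open_rec 0 a s) :: P0) sg d)
| R_Dec f g ts ss P0 sg d :
    length ts = length ss ->
    (mu <= Rmin d (Rhead Rs f g))%R ->
    h_rstep Rs mu (Rig f ts, Rig g ss) P0 sg d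
      (Conf (combine ts ss ++ P0) sg (Rmin d (Rhead Rs f g)))
| R_SV F xs ys P0 sg d n :
    length xs = length ys ->
    let ps := filter (fun p => let '(x, y, _) := p in if bv_eq_dec x y then true else false)
                     (combine (combine xs ys) (ty_args (fv_ty F))) in
    let zs := map (fun p => fst (fst p)) ps in
    let H := FV n (arrows (map snd ps) (ty_res (fv_ty F))) in
    ~ used ((Flex F xs, Flex F ys) :: P0) sg H ->
    let th : subst := fun K => if fvar_eq_dec K F then abstr (ty_args (fv_ty F)) xs (Flex H zs)
                               else eta K in
    h_rstep Rs mu (Flex F xs, Flex F ys) P0 sg d
      (Conf (map (sub_eq th) P0) (comp sg th) d)
| R_Ori a ss F xs P0 sg d :
    (match a with HC _ => True | HB b => In b xs end) ->
    h_rstep Rs mu (Rig a ss, Flex F xs) P0 sg d (Conf ((Flex F xs, Rig a ss) :: P0) sg d)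
| R_LF F xs r P0 sg d phi :
    (match r with
     | Rig (HC _) _ => True
     | Rig (HB b) _ => In b xs
     | Flex _ _ => True
     | Lam _ _ => False end) ->
    ~ In F (fv r) ->
    varelim (used ((Flex F xs, r) :: P0) sg) (Flex F xs, r) phi ->
    let th := restrict phi (F :: fv r) in
    h_rstep Rs mu (Flex F xs, r) P0 sg d (Conf (map (sub_eq th) P0) (comp sg th) d).

Inductive h_step (Rs : similarity) (mu : R) : conf -> conf -> Prop :=
| HS_rule P sg d e P0 C :
    sel P e P0 -> h_rstep Rs mu e P0 sg d C -> h_step Rs mu (Conf P sg d) C
| HS_Fail P sg d e P0 :
    sel P e P0 -> (forall C, ~ h_rstep Rs mu e P0 sg d C) -> h_step Rs mu (Conf P sg d) Bot.

(* Main.v *)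
Require Import Defs.
From Stdlib Require Import List Reals Relations Arith Lia ClassicalEpsilon Classical.
Import ListNotations.

Definition cdec {A : Type} : forall x y : A, {x = y} + {x <> y} :=
  fun x y => excluded_middle_informative (x = y).

Section Sets.
Context {A : Type} (w : A -> nat).
Definition sumw (l : list A) := list_sum (map w l).
Definition SS (l : list A) := sumw (nodup cdec l).

Lemma sumw_app l1 l2 : sumw (l1 ++ l2) = sumw l1 + sumw l2.
Proof. unfold sumw; rewrite map_app, list_sum_app; auto. Qed.

Lemma NoDup_incl_sum a : forall b, NoDup a -> NoDup b -> incl a b -> sumw a <= sumw b.
Proof.
  induction a as [|x a IH]; intros b Ha Hb Hi; simpl.
  - unfold sumw; simpl; lia.
  - assert (Hx : In x b) by (apply Hi; simpl; auto).
    destruct (in_split _ _ Hx) as [b1 [b2 ->]].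
    inversion Ha; subst.
    assert (IH' : sumw a <= sumw (b1 ++ b2)).
    { apply IH; auto. eapply NoDup_remove_1; eauto.
      intros y Hy. assert (Hy' : In y (b1 ++ x :: b2)) by (apply Hi; simpl; auto).
      apply in_app_or in Hy'; apply in_or_app; destruct Hy' as [H|[H|H]]; auto.
      subst; contradiction. }
    unfold sumw in *; simpl. rewrite map_app, list_sum_app in *. simpl. lia.
Qed.

Lemma SS_incl a b : incl a b -> SS a <= SS b.
Proof.
  intros H; unfold SS; apply NoDup_incl_sum; try apply NoDup_nodup.
  intros x Hx; apply nodup_In; apply H; apply nodup_In in Hx; auto.
Qed.

Lemma SS_ext a b : (forall x, In x a <-> In x b) -> SS a = SS b.
Proof.
  intros H; apply Nat.le_antisymm; apply SS_incl; intros x Hx; apply H; auto.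
Qed.

Lemma SS_cons_notin x a : ~ In x a -> SS (x :: a) = w x + SS a.
Proof. intros H; unfold SS; simpl; destruct (in_dec cdec x a); [contradiction|]; reflexivity. Qed.

Lemma SS_cons_in x a : In x a -> SS (x :: a) = SS a.
Proof. intros H; unfold SS; simpl; destruct (in_dec cdec x a); [reflexivity|contradiction]. Qed.

Lemma SS_cons_le x a : SS (x :: a) <= w x + SS a.
Proof. unfold SS, sumw; simpl; destruct (in_dec cdec x a); simpl; lia. Qed.

Lemma SS_app_le a b : SS (a ++ b) <= sumw a + SS b.
Proof.
  induction a as [|x a IH]; simpl. unfold sumw; simpl; lia.
  eapply Nat.le_trans; [apply SS_cons_le|]. unfold sumw in *; simpl; lia.
Qed.

Lemma SS_le_sumw a : SS a <= sumw a.
Proof. pose proof (SS_app_le a []). rewrite app_nil_r in H. unfold SS at 2 in H. simpl in H. unfold sumw at 2 in H. simpl in H. lia. Qed.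

Lemma SS_app_disj a b : (forall x, In x a -> ~ In x b) -> SS a + SS b <= SS (a ++ b).
Proof.
  intros H. unfold SS. rewrite <- sumw_app. apply NoDup_incl_sum.
  - apply NoDup_app; try apply NoDup_nodup. intros x H1 H2; apply nodup_In in H1; apply nodup_In in H2; eapply H; eauto.
  - apply NoDup_nodup.
  - intros x Hx; apply nodup_In; apply in_app_or in Hx; apply in_or_app; destruct Hx as [Hx|Hx]; apply nodup_In in Hx; auto.
Qed.

Lemma SS_sel P e P0 : (forall x, In x P <-> x = e \/ In x P0) -> ~ In e P0 -> SS P = w e + SS P0.
Proof.
  intros H1 H2. rewrite (SS_ext P (e :: P0)). apply SS_cons_notin; auto.
  intros x; rewrite H1; simpl; intuition.
Qed.

Lemma SS_remove x a : In x a -> SS a = w x + SS (remove cdec x a).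
Proof.
  intros H. rewrite (SS_ext a (x :: remove cdec x a)). apply SS_cons_notin, remove_In.
  intros y; simpl; split.
  - intros Hy; destruct (cdec x y); auto. right; apply in_in_remove; auto.
  - intros [<-|Hy]; auto. apply in_remove in Hy; tauto.
Qed.

Lemma sumw_le (w' : A -> nat) l : (forall x, In x l -> w x <= w' x) -> sumw l <= list_sum (map w' l).
Proof.
  induction l as [|x l IH]; intros H; unfold sumw in *; simpl; auto.
  pose proof (H x (or_introl eq_refl)). assert (list_sum (map w l) <= list_sum (map w' l)) by (apply IH; intros; apply H; simpl; auto). lia.
Qed.
End Sets.

Lemma SS_map_le {A B} (wA : A -> nat) (wB : B -> nat) (f : A -> B) l :
  (forall x, In x l -> wB (f x) <= wA x) -> SS wB (map f l) <= SS wA l.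
Proof.
  induction l as [|x l IH]; intros H; simpl. unfold SS; simpl; auto.
  assert (IH' : SS wB (map f l) <= SS wA l) by (apply IH; intros; apply H; simpl; auto).
  destruct (in_dec cdec x l) as [Hi|Hi].
  - rewrite SS_cons_in by (apply in_map; auto). rewrite (SS_cons_in wA) by auto. auto.
  - rewrite (SS_cons_notin wA) by auto. eapply Nat.le_trans; [apply SS_cons_le|].
    pose proof (H x (or_introl eq_refl)). lia.
Qed.

Definition card {A} (l : list A) := SS (fun _ => 1) l.

Fixpoint tm_ind' (P : tm -> Prop)
  (HL : forall A b, P b -> P (Lam A b))
  (HR : forall h args, Forall P args -> P (Rig h args))
  (HF : forall F xs, P (Flex F xs)) (t : tm) : P t :=
  match t with
  | Lam A b => HL A b (tm_ind' P HL HR HF b)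
  | Rig h args => HR h args ((fix go (l : list tm) : Forall P l :=
       match l with [] => Forall_nil _ | u :: l' => Forall_cons _ (tm_ind' P HL HR HF u) (go l') end) args)
  | Flex F xs => HF F xs
  end.

Fixpoint size (t : tm) : nat :=
  match t with
  | Lam _ b => S (size b)
  | Rig _ args => S ((fix go l := match l with [] => 0 | u :: l' => S (size u) + go l' end) args)
  | Flex _ _ => 1
  end.
Fixpoint occ (t : tm) : nat :=
  match t with
  | Lam _ b => occ b
  | Rig _ args => (fix go l := match l with [] => 0 | u :: l' => occ u + go l' end) args
  | Flex _ _ => 1
  end.

Lemma size_Rig h args : size (Rig h args) = S (list_sum (map (fun u => S (size u)) args)).
Proof. induction args; simpl in *; auto. Qed.
Lemma occ_Rig h args : occ (Rig h args) = list_sum (map occ args).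
Proof. induction args; simpl in *; auto. Qed.
Lemma fv_Rig h args : fv (Rig h args) = flat_map fv args.
Proof. induction args; simpl in *; auto. Qed.
Lemma open_Rig k a h args : open_rec k a (Rig h args) = Rig (open_head k a h) (map (open_rec k a) args).
Proof. simpl; try f_equal; induction args; simpl; try f_equal; auto. Qed.
Lemma ren_Rig d n xs h args : ren d n xs (Rig h args) = Rig (ren_head d n xs h) (map (ren d n xs) args).
Proof. simpl; try f_equal; induction args; simpl; try f_equal; auto. Qed.
Lemma close_Rig d ys h args : close_tm d ys (Rig h args) = Rig (close_head d ys h) (map (close_tm d ys) args).
Proof. simpl; try f_equal; induction args; simpl; try f_equal; auto. Qed.
Lemma app_sub_Rig s h args : app_sub s (Rig h args) = Rig h (map (app_sub s) args).
Proof. simpl; try f_equal; induction args; simpl; try f_equal; auto. Qed.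

Lemma flat_map_map_eq {B} (f : tm -> list B) g l : Forall (fun u => f (g u) = f u) l -> flat_map f (map g l) = flat_map f l.
Proof. induction 1; simpl; congruence. Qed.
Lemma sum_map_map_eq (f : tm -> nat) g l : Forall (fun u => f (g u) = f u) l -> list_sum (map f (map g l)) = list_sum (map f l).
Proof. induction 1; simpl; congruence. Qed.

Lemma fv_occ_size_open : forall t k a, fv (open_rec k a t) = fv t /\ occ (open_rec k a t) = occ t /\ size (open_rec k a t) = size t.
Proof.
  induction t using tm_ind'; intros k a.
  - simpl. destruct (IHt (S k) a) as [? [? ?]]. repeat split; congruence.
  - rewrite open_Rig, !fv_Rig, !occ_Rig, !size_Rig. repeat split.
    + apply flat_map_map_eq. eapply Forall_impl; [|eauto]. intros u Hu; apply Hu.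
    + apply sum_map_map_eq. eapply Forall_impl; [|eauto]. intros u Hu; apply Hu.
    + f_equal. rewrite map_map. induction H; simpl; auto. destruct (H k a) as [? [? ->]]. congruence.
  - simpl; auto.
Qed.

Lemma fv_occ_ren : forall t d n xs, fv (ren d n xs t) = fv t /\ occ (ren d n xs t) = occ t.
Proof.
  induction t using tm_ind'; intros d n ys.
  - simpl. destruct (IHt (S d) n ys). split; congruence.
  - rewrite ren_Rig, !fv_Rig, !occ_Rig. split.
    + apply flat_map_map_eq. eapply Forall_impl; [|eauto]. intros u Hu; apply Hu.
    + apply sum_map_map_eq. eapply Forall_impl; [|eauto]. intros u Hu; apply Hu.
  - simpl; auto.
Qed.

Lemma fv_occ_close : forall t d ys, fv (close_tm d ys t) = fv t /\ occ (close_tm d ys t) = occ t.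
Proof.
  induction t using tm_ind'; intros d zs.
  - simpl. destruct (IHt (S d) zs). split; congruence.
  - rewrite close_Rig, !fv_Rig, !occ_Rig. split.
    + apply flat_map_map_eq. eapply Forall_impl; [|eauto]. intros u Hu; apply Hu.
    + apply sum_map_map_eq. eapply Forall_impl; [|eauto]. intros u Hu; apply Hu.
  - simpl; auto.
Qed.

Lemma fv_occ_strip n : forall t, fv (strip n t) = fv t /\ occ (strip n t) = occ t.
Proof. induction n; intros t; simpl; auto. destruct t; simpl; auto. Qed.

Lemma fv_occ_lams As b : fv (lams As b) = fv b /\ occ (lams As b) = occ b.
Proof. induction As; simpl; auto. Qed.

Lemma fv_occ_inst u xs : fv (inst u xs) = fv u /\ occ (inst u xs) = occ u.
Proof.
  unfold inst. destruct (fv_occ_ren (strip (length xs) u) 0 (length xs) xs).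
  destruct (fv_occ_strip (length xs) u). split; congruence.
Qed.

Lemma fv_occ_abstr As xs b : fv (abstr As xs b) = fv b /\ occ (abstr As xs b) = occ b.
Proof.
  unfold abstr. destruct (fv_occ_lams As (close_tm 0 xs b)). destruct (fv_occ_close b 0 xs). split; congruence.
Qed.

Lemma fv_eta K : fv (eta K) = [K].
Proof. unfold eta. apply fv_occ_lams. Qed.
Lemma occ_eta K : occ (eta K) = 1.
Proof. unfold eta. apply fv_occ_lams. Qed.

Lemma fv_open_lams zs : forall t, fv (open_lams zs t) = fv t.
Proof.
  induction zs; intros t; simpl; auto. destruct t; auto. rewrite IHzs. simpl. apply fv_occ_size_open.
Qed.

Lemma fv_app_sub s : forall t x, In x (fv (app_sub s t)) <-> exists K, In K (fv t) /\ In x (fv (s K)).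
Proof.
  induction t using tm_ind'; intros x.
  - simpl. apply IHt.
  - rewrite app_sub_Rig, !fv_Rig. rewrite flat_map_concat_map, map_map, <- flat_map_concat_map.
    rewrite in_flat_map. split.
    + intros [u [Hu Hx]]. rewrite Forall_forall in H. apply H in Hx; auto. destruct Hx as [K [HK HK']].
      exists K; split; auto. apply in_flat_map; eauto.
    + intros [K [HK HK']]. apply in_flat_map in HK. destruct HK as [u [Hu HKu]].
      exists u; split; auto. rewrite Forall_forall in H. apply H; eauto.
  - simpl. rewrite (proj1 (fv_occ_inst _ _)). split.
    + intros H; exists F; simpl; auto.
    + intros [K [[<-|[]] HK]]; auto.
Qed.

Lemma occ_app_sub s : (forall K, occ (s K) = 1) -> forall t, occ (app_sub s t) = occ t.
Proof.
  intros Hs. induction t using tm_ind'.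
  - simpl; auto.
  - rewrite app_sub_Rig, !occ_Rig. apply sum_map_map_eq. auto.
  - simpl. rewrite (proj2 (fv_occ_inst _ _)). auto.
Qed.

Definition Lft (Q : list eqn) := flat_map (fun e => fv (fst e)) Q.

Lemma In_Lft Q K : In K (Lft Q) <-> exists e, In e Q /\ In K (fv (fst e)).
Proof. unfold Lft; rewrite in_flat_map; reflexivity. Qed.
Lemma In_fv_eqs Q x : In x (fv_eqs Q) <-> exists e, In e Q /\ (In x (fv (fst e)) \/ In x (fv (snd e))).
Proof. unfold fv_eqs; rewrite in_flat_map. split; intros [e [H1 H2]]; exists e; split; auto; [apply in_app_or in H2|apply in_or_app]; auto. Qed.

Section VE.
Variable F0 : fvar.
Variable r0 : tm.
Definition VV := F0 :: fv r0.
Definition Img (phi : subst) := flat_map (fun K => fv (phi K)) VV.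
Definition Un Q phi := fv_eqs Q ++ Img phi.
Definition Dl Q phi := filter (fun x => if in_dec fvar_eq_dec x (Lft Q) then false else true) (Un Q phi).
Lemma In_Dl Q phi x : In x (Dl Q phi) <-> In x (Un Q phi) /\ ~ In x (Lft Q).
Proof. unfold Dl; rewrite filter_In. destruct (in_dec fvar_eq_dec x (Lft Q)); intuition congruence. Qed.
Lemma In_Un Q phi x : In x (Un Q phi) <-> In x (fv_eqs Q) \/ In x (Img phi).
Proof. unfold Un; split; [apply in_app_or|apply in_or_app]. Qed.
Lemma In_Img phi x : In x (Img phi) <-> exists K, In K VV /\ In x (fv (phi K)).
Proof. unfold Img; rewrite in_flat_map; reflexivity. Qed.

Definition Inv (c : list eqn * subst) :=
  let (Q, phi) := c in
  (forall e K, In e Q -> In K (Lft Q) -> ~ In K (fv (snd e))) /\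
  (forall e1 e2 K, In e1 Q -> In e2 Q -> In K (fv (fst e1)) -> In K (fv (fst e2)) -> e1 = e2) /\
  card (Dl Q phi) <= card (fv r0).

Lemma Inv_ext Q Q' phi : (forall x, In x Q <-> In x Q') -> Inv (Q, phi) -> Inv (Q', phi).
Proof.
  intros HQ [I1 [I2 I3]]. split; [|split].
  - intros e K He HK. apply (I1 e K); [apply HQ; auto|]. apply In_Lft in HK; apply In_Lft.
    destruct HK as [e' [? ?]]; exists e'; split; auto; apply HQ; auto.
  - intros e1 e2 K H1 H2; apply I2; apply HQ; auto.
  - unfold card in *. rewrite <- I3. apply Nat.eq_le_incl. apply SS_ext. intros x.
    rewrite !In_Dl, !In_Un, !In_fv_eqs, !In_Lft.
    split; intros [A1 A2]; split.
    + destruct A1 as [[e [? ?]]|]; auto. left; exists e; split; auto; apply HQ; auto.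
    + intros [e [? ?]]; apply A2; exists e; split; auto; apply HQ; auto.
    + destruct A1 as [[e [? ?]]|]; auto. left; exists e; split; auto; apply HQ; auto.
    + intros [e [? ?]]; apply A2; exists e; split; auto; apply HQ; auto.
Qed.

Lemma combine_ex {A B} (l1 : list A) (l2 : list B) b : length l1 = length l2 -> In b l2 -> exists a, In (a,b) (combine l1 l2).
Proof.
  revert l2; induction l1 as [|x l1 IH]; intros [|y l2] Hl Hb; simpl in *; try discriminate; try contradiction.
  destruct Hb as [<-|Hb]; eauto. destruct (IH l2) as [a' Ha]; auto. eauto.
Qed.

Lemma combine_nodup {A B C} (f : B -> C) (l1 : list A) l2 a1 b1 a2 b2 : NoDup (map f l2) ->
  In (a1,b1) (combine l1 l2) -> In (a2,b2) (combine l1 l2) -> f b1 = f b2 -> (a1,b1) = (a2,b2).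
Proof.
  revert l2; induction l1 as [|x l1 IH]; intros [|y l2] Hnd H1 H2 Hf; simpl in *; try contradiction.
  inversion Hnd; subst.
  destruct H1 as [E1|H1]; destruct H2 as [E2|H2].
  - congruence.
  - inversion E1; subst. exfalso; apply H3. rewrite Hf. apply in_map. eapply in_combine_r; eauto.
  - inversion E2; subst. exfalso; apply H3. rewrite <- Hf. apply in_map. eapply in_combine_r; eauto.
  - eapply IH; eauto.
Qed.

Lemma Lft_app A B : Lft (A ++ B) = Lft A ++ Lft B.
Proof. unfold Lft; apply flat_map_app. Qed.

Lemma card_incl {A} (l l' : list A) : incl l l' -> card l <= card l'.
Proof. apply SS_incl. Qed.

Lemma ve1_case avoid F xs a ss P0 phi ch :
  length ch = length ss -> NoDup (map fst ch) ->
  Forall (fun H => ~ avoid H /\ ~ used ((Flex F xs, Rig a ss) :: P0) phi H) (map fst ch) ->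
  let newe := map (fun p => let '(s, (H, zs)) := p in
                              (Flex H (xs ++ map BAtom zs), open_lams zs s)) (combine ss ch) in
  let args' := map (fun c => let '(H, zs) := c in
                       abstr (map atom_ty zs) (map BAtom zs) (Flex H (xs ++ map BAtom zs))) ch in
  let th : subst := fun K => if fvar_eq_dec K F
                             then abstr (ty_args (fv_ty F)) xs (Rig a args')
                             else eta K in
  ~ In (Flex F xs, Rig a ss) P0 -> Inv ((Flex F xs, Rig a ss) :: P0, phi) ->
  Inv (newe ++ P0, Defs.comp phi th).
Proof.
  intros Hlen Hnd Hfr newe args' th Hn [I1 [I2 I3]].
  set (e := (Flex F xs, Rig a ss)) in *.
  assert (F_L : In F (Lft (e :: P0))) by (simpl; auto).
  assert (Ffresh : forall H, In H (map fst ch) -> ~ In H (fv_eqs (e :: P0))).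
  { intros H HH. rewrite Forall_forall in Hfr. destruct (Hfr H HH) as [_ Hu]. intros Hc; apply Hu; left; auto. }
  assert (Hnew : forall e1, In e1 newe -> exists s H zs, In (s,(H,zs)) (combine ss ch) /\
            e1 = (Flex H (xs ++ map BAtom zs), open_lams zs s)).
  { intros e1 He1. unfold newe in He1. apply in_map_iff in He1. destruct He1 as [[s [H zs]] [<- Hin]].
    exists s, H, zs; auto. }
  assert (Hnew_lhs : forall e1 K, In e1 newe -> In K (fv (fst e1)) -> In K (map fst ch)).
  { intros e1 K He1 HK. destruct (Hnew e1 He1) as [s [H [zs [Hin ->]]]]. simpl in HK.
    destruct HK as [->|[]]. apply in_combine_r in Hin. change K with (fst (K, zs)). apply in_map; auto. }
  assert (Hnew_rhs : forall e1 x, In e1 newe -> In x (fv (snd e1)) -> In x (fv (snd e))).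
  { intros e1 x He1 Hx. destruct (Hnew e1 He1) as [s [H [zs [Hin ->]]]]. simpl in Hx.
    rewrite fv_open_lams in Hx. simpl snd. rewrite fv_Rig. apply in_flat_map. exists s; split; auto.
    eapply in_combine_l; eauto. }
  assert (HLnew : forall H, In H (map fst ch) -> In H (Lft newe)).
  { intros H HH. apply in_map_iff in HH. destruct HH as [[H' zs] [E Hin]]. simpl in E; subst H'.
    destruct (combine_ex ss ch (H, zs)) as [s Hs]; auto.
    apply In_Lft. exists (Flex H (xs ++ map BAtom zs), open_lams zs s). split; simpl; auto.
    unfold newe. apply in_map_iff. exists (s, (H, zs)); auto. }
  assert (HImg : forall x, In x (Img (Defs.comp phi th)) -> In x (map fst ch) \/ (In x (Img phi) /\ x <> F)).
  { intros x Hx. apply In_Img in Hx. destruct Hx as [K [HK Hx]]. unfold Defs.comp in Hx.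
    apply fv_app_sub in Hx. destruct Hx as [K' [HK' Hx]]. unfold th in Hx.
    destruct (fvar_eq_dec K' F) as [->|Hne].
    - left. rewrite (proj1 (fv_occ_abstr _ _ _)), fv_Rig in Hx. apply in_flat_map in Hx.
      destruct Hx as [u [Hu Hx]]. unfold args' in Hu. apply in_map_iff in Hu.
      destruct Hu as [[H zs] [<- Hin]]. rewrite (proj1 (fv_occ_abstr _ _ _)) in Hx. simpl in Hx.
      destruct Hx as [<-|[]]. change H with (fst (H, zs)); apply in_map; auto.
    - right. rewrite fv_eta in Hx. destruct Hx as [<-|[]]. split; auto. apply In_Img; eauto. }
  split; [|split].
  - intros e1 K He1 HK HKs. rewrite Lft_app in HK. apply in_app_or in HK. apply in_app_or in He1.
    destruct HK as [HK|HK].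
    + apply In_Lft in HK. destruct HK as [e2 [He2 HK]]. apply (Hnew_lhs e2 K He2) in HK.
      apply (Ffresh K HK). apply In_fv_eqs. destruct He1 as [He1|He1].
      * exists e; split; [left; auto|right]. apply (Hnew_rhs e1); auto.
      * exists e1; split; [right; auto|right; auto].
    + assert (HK' : In K (Lft (e :: P0))) by (simpl; auto).
      destruct He1 as [He1|He1].
      * apply (I1 e K (or_introl eq_refl) HK'). apply (Hnew_rhs e1); auto.
      * apply (I1 e1 K (or_intror He1) HK' HKs).
  - intros e1 e2 K He1 He2 H1 H2. apply in_app_or in He1; apply in_app_or in He2.
    destruct He1 as [He1|He1]; destruct He2 as [He2|He2].
    + destruct (Hnew e1 He1) as [s1 [G1 [zs1 [Hin1 E1]]]]. destruct (Hnew e2 He2) as [s2 [G2 [zs2 [Hin2 E2]]]].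
      subst e1 e2. simpl in H1, H2. destruct H1 as [E1|[]]. destruct H2 as [E2|[]].
      assert (EG : G1 = G2) by congruence.
      pose proof (combine_nodup fst ss ch s1 (G1,zs1) s2 (G2,zs2) Hnd Hin1 Hin2 EG) as E.
      inversion E; subst; auto.
    + exfalso. apply (Ffresh K (Hnew_lhs e1 K He1 H1)). apply In_fv_eqs. exists e2; split; [right|left]; auto.
    + exfalso. apply (Ffresh K (Hnew_lhs e2 K He2 H2)). apply In_fv_eqs. exists e1; split; [right|left]; auto.
    + apply (I2 e1 e2 K); simpl; auto.
  - eapply Nat.le_trans; [|exact I3]. apply card_incl. intros x Hx.
    apply In_Dl in Hx. destruct Hx as [Hx1 Hx2]. rewrite Lft_app in Hx2.
    assert (nH : ~ In x (map fst ch)) by (intros Hc; apply Hx2; apply in_or_app; left; auto).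
    assert (nL : ~ In x (Lft P0)) by (intros Hc; apply Hx2; apply in_or_app; right; auto).
    assert (Goal : In x (Un (e :: P0) phi) /\ x <> F).
    { apply In_Un in Hx1. destruct Hx1 as [Hx1|Hx1].
      - apply In_fv_eqs in Hx1. destruct Hx1 as [e1 [He1 Hx]]. apply in_app_or in He1.
        destruct He1 as [He1|He1]; destruct Hx as [Hx|Hx].
        + exfalso; apply nH; eapply Hnew_lhs; eauto.
        + pose proof (Hnew_rhs e1 x He1 Hx). split.
          * apply In_Un; left; apply In_fv_eqs; exists e; split; [left|right]; auto.
          * intros ->. apply (I1 e F (or_introl eq_refl) F_L); auto.
        + exfalso; apply nL; apply In_Lft; eauto.
        + split.
          * apply In_Un; left; apply In_fv_eqs; exists e1; split; [right|right]; auto.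
          * intros ->. apply (I1 e1 F (or_intror He1) F_L); auto.
      - destruct (HImg x Hx1) as [Hc|[Hc1 Hc2]]; [contradiction|]. split; auto. apply In_Un; auto. }
    destruct Goal as [G1 G2]. apply In_Dl. split; auto. simpl. intros [Hc|Hc]; auto.
Qed.
Lemma ve2_gen F xs G ys P0 phi H (th : subst) :
  ~ In H (fv_eqs ((Flex F xs, Flex G ys) :: P0)) ->
  (forall K x, In x (fv (th K)) -> (x = H /\ (K = F \/ K = G)) \/ (x = K /\ K <> F /\ K <> G)) ->
  (forall K, K <> F -> K <> G -> In K (fv (th K))) ->
  ~ In (Flex F xs, Flex G ys) P0 -> Inv ((Flex F xs, Flex G ys) :: P0, phi) ->
  Inv (map (sub_eq th) P0, Defs.comp phi th).
Proof.
  intros Hfr Hth Hth2 Hn [I1 [I2 I3]].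
  set (e := (Flex F xs, Flex G ys)) in *.
  assert (fvth : forall t x, In x (fv (app_sub th t)) -> (x = H /\ (In F (fv t) \/ In G (fv t))) \/ (In x (fv t) /\ x <> F /\ x <> G)).
  { intros t x Hx. apply fv_app_sub in Hx. destruct Hx as [K [HK Hx]].
    destruct (Hth K x Hx) as [[-> [->| ->]]|[-> [? ?]]]; auto. }
  assert (fvth2 : forall t x, In x (fv t) -> x <> F -> x <> G -> In x (fv (app_sub th t))).
  { intros t x Hx H1 H2. apply fv_app_sub. exists x; auto. }
  assert (F_L : In F (Lft (e :: P0))) by (simpl; auto).
  assert (G_nL : ~ In G (Lft (e :: P0))).
  { intros Hc. apply (I1 e G (or_introl eq_refl) Hc). simpl; auto. }
  assert (FG : F <> G) by (intros ->; auto).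
  assert (F_nL0 : forall e1, In e1 P0 -> ~ In F (fv (fst e1))).
  { intros e1 He1 Hc. assert (e = e1) by (apply (I2 e e1 F); simpl; auto). subst e1. auto. }
  assert (G_nL0 : forall e1, In e1 P0 -> ~ In G (fv (fst e1))).
  { intros e1 He1 Hc. apply G_nL. apply In_Lft. exists e1; simpl; auto. }
  assert (H_n : forall e1, In e1 P0 -> ~ In H (fv (fst e1)) /\ ~ In H (fv (snd e1))).
  { intros e1 He1; split; intros Hc; apply Hfr; apply In_fv_eqs; exists e1; simpl; auto. }
  assert (Lq : forall e1 x, In e1 P0 -> In x (fv (app_sub th (fst e1))) -> In x (fv (fst e1))).
  { intros e1 x He1 Hx. destruct (fvth _ _ Hx) as [[_ [Hc|Hc]]|[? _]]; auto.
    - exfalso; eapply F_nL0; eauto.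
    - exfalso; eapply G_nL0; eauto. }
  assert (LQ : forall x, In x (Lft (map (sub_eq th) P0)) -> In x (Lft P0)).
  { intros x Hx. apply In_Lft in Hx. destruct Hx as [e1' [He1' Hx]]. apply in_map_iff in He1'.
    destruct He1' as [e1 [<- He1]]. apply In_Lft. exists e1; split; auto. }
  split; [|split].
  - intros e1' K He1' HK HKs. apply in_map_iff in He1'. destruct He1' as [e1 [<- He1]].
    apply LQ in HK. simpl in HKs. destruct (fvth _ _ HKs) as [[-> _]|[HKs' _]].
    + apply Hfr. apply In_fv_eqs. apply In_Lft in HK. destruct HK as [e2 [? ?]]. exists e2; simpl; auto.
    + apply (I1 e1 K); simpl; auto.
  - intros e1' e2' K He1' He2' H1 H2. apply in_map_iff in He1'. destruct He1' as [e1 [<- He1]].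
    apply in_map_iff in He2'. destruct He2' as [e2 [<- He2]]. simpl in H1, H2.
    apply Lq in H1; auto. apply Lq in H2; auto. f_equal. apply (I2 e1 e2 K); simpl; auto.
  - eapply Nat.le_trans; [|exact I3].
    assert (GD : In G (Dl (e :: P0) phi)).
    { apply In_Dl; split; auto. apply In_Un; left; apply In_fv_eqs; exists e; simpl; auto. }
    unfold card. rewrite (SS_remove (fun _ : fvar => 1) G _ GD).
    eapply Nat.le_trans; [|apply (SS_cons_le (fun _ : fvar => 1) H)]. apply SS_incl. intros x Hx.
    apply In_Dl in Hx. destruct Hx as [Hx1 Hx2].
    destruct (fvar_eq_dec x H) as [->|HxH]; [left; auto|right].
    assert (nL : ~ In x (Lft P0)).
    { intros Hc. apply Hx2. apply In_Lft in Hc. destruct Hc as [e1 [He1 Hc]]. apply In_Lft.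
      exists (sub_eq th e1). split; [apply in_map; auto|]. simpl. apply fvth2; auto.
      - intros ->. eapply F_nL0; eauto.
      - intros ->. eapply G_nL0; eauto. }
    assert (Gl : (In x (fv_eqs (e :: P0)) \/ In x (Img phi)) /\ x <> F /\ x <> G).
    { apply In_Un in Hx1. destruct Hx1 as [Hx1|Hx1].
      - apply In_fv_eqs in Hx1. destruct Hx1 as [e1' [He1' Hx]]. apply in_map_iff in He1'.
        destruct He1' as [e1 [<- He1]]. simpl in Hx.
        destruct Hx as [Hx|Hx]; destruct (fvth _ _ Hx) as [[? _]|[Hx' [? ?]]]; try contradiction;
          (split; [left; apply In_fv_eqs; exists e1; simpl; auto|auto]).
      - apply In_Img in Hx1. destruct Hx1 as [K [HK Hx]]. unfold Defs.comp in Hx.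
        destruct (fvth _ _ Hx) as [[? _]|[Hx' [? ?]]]; try contradiction.
        split; auto. right. apply In_Img; eauto. }
    destruct Gl as [Gl1 [Gl2 Gl3]].
    apply in_in_remove; auto. apply In_Dl. split; [apply In_Un; auto|].
    simpl. intros [Hc|Hc]; auto.
Qed.

Lemma ve_pres avoid e P0 phi Q' phi' : ve_rstep avoid e P0 phi Q' phi' -> ~ In e P0 -> Inv (e :: P0, phi) -> Inv (Q', phi').
Proof.
  intros Hs; destruct Hs; intros Hn HI.
  - eapply ve1_case; eauto.
  - eapply (ve2_gen F xs G ys P0 phi H th); auto.
    + intros Hc; apply H1; left; auto.
    + intros K x Hx. unfold th in Hx. destruct (fvar_eq_dec K F) as [->|H2].
      * left. rewrite (proj1 (fv_occ_abstr _ _ _)) in Hx. simpl in Hx. destruct Hx as [<-|[]]; auto.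
      * destruct (fvar_eq_dec K G) as [->|H3].
        -- left. rewrite (proj1 (fv_occ_abstr _ _ _)) in Hx. simpl in Hx. destruct Hx as [<-|[]]; auto.
        -- right. rewrite fv_eta in Hx. destruct Hx as [<-|[]]; auto.
    + intros K H2 H3. unfold th. destruct (fvar_eq_dec K F); [contradiction|].
      destruct (fvar_eq_dec K G); [contradiction|]. rewrite fv_eta; simpl; auto.
Qed.

Lemma varelim_bound avoid xs phi : ~ In F0 (fv r0) -> varelim avoid (Flex F0 xs, r0) phi ->
  card (Img phi) <= card (fv r0).
Proof.
  intros HF Hv. unfold varelim in Hv.
  assert (Inv ([(Flex F0 xs, r0)], eps)).
  { split; [|split].
    - intros e K [<-|[]] HK. simpl in HK. destruct HK as [<-|[]]; simpl; auto.
    - intros e1 e2 K [<-|[]] [<-|[]]; auto.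
    - apply card_incl. intros x Hx. apply In_Dl in Hx. destruct Hx as [Hx1 Hx2].
      simpl in Hx2. apply In_Un in Hx1. destruct Hx1 as [Hx1|Hx1].
      + simpl in Hx1. rewrite app_nil_r in Hx1. destruct Hx1 as [<-|Hx1]; auto. tauto.
      + apply In_Img in Hx1. destruct Hx1 as [K [HK Hx]]. unfold eps in Hx. rewrite fv_eta in Hx.
        destruct Hx as [<-|[]]. destruct HK as [<-|HK]; auto. tauto. }
  assert (HI : Inv ([], phi)).
  { change (Inv (fst ([] : list eqn, phi), snd ([] : list eqn, phi))).
    set (c := ([] : list eqn, phi)) in *. clearbody c.
    assert (G : forall c1 c2, clos_refl_trans _ (ve_step avoid) c1 c2 -> Inv (fst c1, snd c1) -> Inv (fst c2, snd c2)).
    { intros c1 c2 Hc. induction Hc; auto.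
      destruct H0 as [e [P0 [[Hs1 Hs2] Hr]]]. intros HI.
      apply (ve_pres avoid e P0 (snd x) (fst y) (snd y)); auto.
      apply (Inv_ext (fst x)); auto. intros z; rewrite Hs1; simpl; intuition. }
    apply (G _ _ Hv). exact H. }
  destruct HI as [_ [_ HI]]. eapply Nat.le_trans; [|exact HI].
  apply card_incl. intros x Hx. apply In_Dl. split; [apply In_Un; auto|simpl; auto].
Qed.
End VE.

Definition occe (e : eqn) := occ (fst e) + occ (snd e).
Definition we (e : eqn) := size (fst e) + size (snd e) + (match fst e with Flex _ _ => 0 | _ => 1 end).
Definition NN P := card (fv_eqs P).
Definition OO P := SS occe P.
Definition ZZ P := SS we P.
Definition lexlt (a1 b1 c1 a2 b2 c2 : nat) := a1 < a2 \/ (a1 = a2 /\ b1 < b2) \/ (a1 = a2 /\ b1 = b2 /\ c1 < c2).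

Lemma lex3 a1 b1 c1 a2 b2 c2 : a1 <= a2 -> b1 <= b2 -> c1 < c2 -> lexlt a1 b1 c1 a2 b2 c2.
Proof. unfold lexlt; lia. Qed.
Lemma lex2 a1 b1 c1 a2 b2 c2 : a1 <= a2 -> b1 < b2 -> lexlt a1 b1 c1 a2 b2 c2.
Proof. unfold lexlt; lia. Qed.
Lemma lex1 a1 b1 c1 a2 b2 c2 : a1 < a2 -> lexlt a1 b1 c1 a2 b2 c2.
Proof. unfold lexlt; lia. Qed.

Lemma SS_app_le2 {A} (w : A -> nat) a b : SS w (a ++ b) <= SS w a + SS w b.
Proof.
  rewrite (SS_ext w (a ++ b) (nodup cdec a ++ b)). apply SS_app_le.
  intros x; split; intros H; apply in_app_or in H; apply in_or_app; destruct H as [H|H]; auto; left.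
  - apply nodup_In; auto.
  - apply nodup_In in H; auto.
Qed.

Lemma sum_combine {A B} (f : A -> nat) (g : B -> nat) l1 l2 :
  list_sum (map (fun p => f (fst p) + g (snd p)) (combine l1 l2)) <= list_sum (map f l1) + list_sum (map g l2).
Proof.
  revert l2; induction l1 as [|x l1 IH]; intros [|y l2]; simpl; try lia.
  specialize (IH l2). lia.
Qed.

Lemma fv_eqs_sel P e P0 : (forall x, In x P <-> x = e \/ In x P0) ->
  forall x, In x (fv_eqs P) <-> In x (fv_eqs (e :: P0)).
Proof.
  intros HP x. rewrite !In_fv_eqs. split; intros [e1 [H1 H2]]; exists e1; split; auto.
  - apply HP in H1; simpl; destruct H1; auto.
  - apply HP; simpl in H1; destruct H1; auto.
Qed.

Lemma NN_sel P e P0 : (forall x, In x P <-> x = e \/ In x P0) -> NN P = NN (e :: P0).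
Proof. intros HP; apply SS_ext, fv_eqs_sel; auto. Qed.

Lemma dec_step Rs mu P e P0 sg d C : sel P e P0 -> h_rstep Rs mu e P0 sg d C ->
  match C with Bot => True | Conf P' _ _ => lexlt (NN P') (OO P') (ZZ P') (NN P) (OO P) (ZZ P) end.
Proof.
  intros [HP Hn] Hr.
  assert (HO : OO P = occe e + OO P0) by (apply SS_sel; auto).
  assert (HZ : ZZ P = we e + ZZ P0) by (apply SS_sel; auto).
  assert (HN : NN P = NN (e :: P0)) by (apply NN_sel; auto).
  rewrite HO, HZ, HN. clear HO HZ HN HP.
  destruct Hr.
  -
    destruct (fv_occ_size_open t 0 a) as [f1 [o1 s1]].
    destruct (fv_occ_size_open s 0 a) as [f2 [o2 s2]].
    assert (N1 : NN ((open_rec 0 a t, open_rec 0 a s) :: P0) <= NN ((Lam A t, Lam A s) :: P0)).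
    { apply card_incl. intros x Hx. simpl in *. rewrite f1, f2 in Hx. auto. }
    assert (O1 : OO ((open_rec 0 a t, open_rec 0 a s) :: P0) <= occe (Lam A t, Lam A s) + OO P0).
    { eapply Nat.le_trans; [apply SS_cons_le|]. unfold OO, occe; simpl. rewrite o1, o2. lia. }
    assert (Z1 : ZZ ((open_rec 0 a t, open_rec 0 a s) :: P0) < we (Lam A t, Lam A s) + ZZ P0).
    { eapply Nat.le_lt_trans; [apply SS_cons_le|]. unfold ZZ, we; simpl. rewrite s1, s2.
      destruct (open_rec 0 a t); lia. }
    apply lex3; auto.
  -
    assert (N1 : NN (combine ts ss ++ P0) <= NN ((Rig f ts, Rig g ss) :: P0)).
    { apply card_incl. intros x Hx. apply In_fv_eqs in Hx. apply In_fv_eqs.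
      destruct Hx as [e1 [He1 Hx]]. apply in_app_or in He1. destruct He1 as [He1|He1].
      - exists (Rig f ts, Rig g ss). split; [left; auto|]. destruct e1 as [t1 s1]. cbn [fst snd] in Hx |- *.
        rewrite !fv_Rig, !in_flat_map. destruct Hx as [Hx|Hx]; [left|right]; eexists; split; eauto.
        + eapply in_combine_l; eauto.
        + eapply in_combine_r; eauto.
      - exists e1; simpl; auto. }
    assert (O1 : OO (combine ts ss ++ P0) <= occe (Rig f ts, Rig g ss) + OO P0).
    { assert (E1: occe (Rig f ts, Rig g ss) = list_sum (map occ ts) + list_sum (map occ ss)) by (unfold occe; cbn [fst snd]; rewrite !occ_Rig; auto).
      assert (E2: sumw occe (combine ts ss) <= list_sum (map occ ts) + list_sum (map occ ss)) by (unfold sumw, occe; apply sum_combine).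
      pose proof (SS_app_le (A:=eqn) occe (combine ts ss) P0) as H9. unfold OO. eapply Nat.le_trans; [exact H9|]. lia. }
    assert (Z1 : ZZ (combine ts ss ++ P0) < we (Rig f ts, Rig g ss) + ZZ P0).
    { assert (E0 : sumw we (combine ts ss) <= list_sum (map (fun p => (fun u => S (size u)) (fst p) + (fun u => S (size u)) (snd p)) (combine ts ss))).
      { apply sumw_le. intros [x y] _. unfold we; simpl. destruct x; lia. }
      pose proof (sum_combine (fun u => S (size u)) (fun u => S (size u)) ts ss).
      assert (E1 : we (Rig f ts, Rig g ss) = S (S (list_sum (map (fun u => S (size u)) ts) + S (list_sum (map (fun u => S (size u)) ss))))).
      { unfold we; cbn [fst snd]. rewrite !size_Rig. lia. }
      pose proof (SS_app_le (A:=eqn) we (combine ts ss) P0) as H9. unfold ZZ. eapply Nat.le_lt_trans; [exact H9|]. lia. }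
    apply lex3; auto.
  -
    set (e := (Flex F xs, Flex F ys)) in *.
    assert (Hfr : ~ In H0 (fv_eqs (e :: P0))) by (intros Hc; apply H1; left; auto).
    assert (Hth : forall K x, In x (fv (th K)) -> (x = H0 /\ K = F) \/ (x = K /\ K <> F)).
    { intros K x Hx. unfold th in Hx. destruct (fvar_eq_dec K F) as [->|Hne].
      - left. rewrite (proj1 (fv_occ_abstr _ _ _)) in Hx. simpl in Hx. destruct Hx as [<-|[]]; auto.
      - right. rewrite fv_eta in Hx. destruct Hx as [<-|[]]; auto. }
    assert (Hocc : forall K, occ (th K) = 1).
    { intros K. unfold th. destruct (fvar_eq_dec K F). rewrite (proj2 (fv_occ_abstr _ _ _)); auto. apply occ_eta. }
    assert (N1 : NN (map (sub_eq th) P0) <= NN (e :: P0)).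
    { unfold NN, card. assert (FI : In F (fv_eqs (e :: P0))) by (simpl; auto).
      rewrite (SS_remove (fun _ : fvar => 1) F _ FI).
      eapply Nat.le_trans; [|apply (SS_cons_le (fun _ : fvar => 1) H0)]. apply SS_incl. intros x Hx.
      apply In_fv_eqs in Hx. destruct Hx as [e1' [He1' Hx]]. apply in_map_iff in He1'.
      destruct He1' as [e1 [<- He1]].
      assert (Hx' : exists K, (In K (fv (fst e1)) \/ In K (fv (snd e1))) /\ In x (fv (th K))).
      { simpl in Hx. destruct Hx as [Hx|Hx]; apply fv_app_sub in Hx; destruct Hx as [K [? ?]]; eauto. }
      destruct Hx' as [K [HK Hx2]]. destruct (Hth K x Hx2) as [[-> _]|[-> HKF]]; [left; auto|right].
      apply in_in_remove; auto. apply In_fv_eqs. exists e1; simpl; auto. }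
    assert (O1 : OO (map (sub_eq th) P0) <= OO P0).
    { apply SS_map_le. intros x _. unfold occe, sub_eq; simpl. rewrite !(occ_app_sub th Hocc). lia. }
    assert (occe e = 2) by reflexivity.
    apply lex2; auto; lia.
  -
    assert (NN ((Flex F xs, Rig a ss) :: P0) <= NN ((Rig a ss, Flex F xs) :: P0)).
    { apply card_incl. intros x Hx. apply In_fv_eqs in Hx; apply In_fv_eqs.
      destruct Hx as [e1 [[<-|He1] Hx]].
      - exists (Rig a ss, Flex F xs). split; [left; auto|]. cbn [fst snd] in *. tauto.
      - exists e1; simpl; auto. }
    assert (OO ((Flex F xs, Rig a ss) :: P0) <= occe (Rig a ss, Flex F xs) + OO P0).
    { eapply Nat.le_trans; [apply SS_cons_le|]. unfold OO, occe; simpl. lia. }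
    assert (ZZ ((Flex F xs, Rig a ss) :: P0) < we (Rig a ss, Flex F xs) + ZZ P0).
    { eapply Nat.le_lt_trans; [apply SS_cons_le|]. unfold ZZ, we; simpl. lia. }
    apply lex3; auto.
  -
    pose proof (varelim_bound F r _ xs phi H0 H1) as Hb.
    set (V := F :: fv r).
    set (Fl := filter (fun x => if in_dec fvar_eq_dec x V then false else true) (fv_eqs ((Flex F xs, r) :: P0))).
    assert (N1 : NN (map (sub_eq th) P0) <= card (Img F r phi) + card Fl).
    { eapply Nat.le_trans; [|apply SS_app_le2]. apply card_incl. intros x Hx.
      apply In_fv_eqs in Hx. destruct Hx as [e1' [He1' Hx]]. apply in_map_iff in He1'.
      destruct He1' as [e1 [<- He1]].
      assert (Hx' : exists K, (In K (fv (fst e1)) \/ In K (fv (snd e1))) /\ In x (fv (th K))).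
      { simpl in Hx. destruct Hx as [Hx|Hx]; apply fv_app_sub in Hx; destruct Hx as [K [? ?]]; eauto. }
      clear Hx. destruct Hx' as [K [HK Hx]]. unfold th, restrict in Hx. apply in_or_app.
      destruct (in_dec fvar_eq_dec K (F :: fv r)) as [HV|HV].
      - left. apply In_Img. eauto.
      - right. rewrite fv_eta in Hx. destruct Hx as [<-|[]]. unfold Fl. apply filter_In. split.
        + apply In_fv_eqs. exists e1; simpl; auto.
        + fold V in HV. destruct (in_dec fvar_eq_dec K V); tauto. }
    assert (N2 : card V + card Fl <= NN ((Flex F xs, r) :: P0)).
    { eapply Nat.le_trans; [apply SS_app_disj|].
      - intros x H2 H3. unfold Fl in H3. apply filter_In in H3. destruct H3 as [_ H3]. destruct (in_dec fvar_eq_dec x V); [discriminate|tauto].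
      - apply card_incl. intros x Hx. apply in_app_or in Hx. destruct Hx as [Hx|Hx].
        + simpl. destruct Hx as [<-|Hx]; auto. right. apply in_or_app; auto.
        + unfold Fl in Hx. apply filter_In in Hx. tauto. }
    assert (card V = S (card (fv r))).
    { unfold V, card. rewrite SS_cons_notin; auto. }
    apply lex1. eapply Nat.le_lt_trans; [exact N1|]. eapply Nat.lt_le_trans; [|exact N2]. lia.
Qed.

Lemma acc_all Rs mu : forall n m k P sg d, NN P = n -> OO P = m -> ZZ P = k ->
  Acc (fun C' C => h_step Rs mu C C') (Conf P sg d).
Proof.
  intros n. induction n as [n IHn] using lt_wf_ind.
  intros m. induction m as [m IHm] using lt_wf_ind.
  intros k. induction k as [k IHk] using lt_wf_ind.
  intros P sg d HN HO HZ. constructor. intros C' Hs.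
  inversion Hs; subst.
  - pose proof (dec_step Rs mu P e P1 sg d C' H3 H4) as Hd.
    destruct C' as [|P' sg' d'].
    + constructor. intros y Hy. inversion Hy.
    + destruct Hd as [Hd|[[Hd1 Hd2]|[Hd1 [Hd2 Hd3]]]].
      * eapply IHn; eauto.
      * eapply (IHm (OO P')); eauto.
      * eapply (IHk (ZZ P')); eauto.
  - constructor. intros y Hy. inversion Hy.
Qed.

Theorem theorem2 :
  forall (Rs : similarity) (mu : R), (0 < mu <= 1)%R ->
  forall (t s : tm) (T : ty),
    pattern [] t T -> pattern [] s T -> atoms t = [] -> atoms s = [] ->
    Acc (fun C' C => h_step Rs mu C C') (Conf [(t, s)] eps 1%R) /\
    (forall C, clos_refl_trans _ (h_step Rs mu) (Conf [(t, s)] eps 1%R) C ->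
       (forall C', ~ h_step Rs mu C C') ->
       C = Bot \/ exists sg d, C = Conf [] sg d).
Proof.
  intros Rs mu _ t s T _ _ _ _. split.
  - eapply acc_all; eauto.
  - intros C _ Hnf. destruct C as [|P sg d]; [left; auto|right].
    destruct P as [|e P0']; [eauto|exfalso].
    set (P0 := remove cdec e P0').
    assert (Hsel : sel (e :: P0') e P0).
    { split.
      - intros x; simpl; split.
        + intros [<-|Hx]; auto. destruct (cdec x e) as [->|Hne]; auto. right; apply in_in_remove; auto.
        + intros [->|Hx]; auto. apply in_remove in Hx; tauto.
      - apply remove_In. }
    destruct (classic (exists C, h_rstep Rs mu e P0 sg d C)) as [[C HC]|HC].
    + apply (Hnf C). eapply HS_rule; eauto.
    + apply (Hnf Bot). eapply HS_Fail; eauto.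
Qed.
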